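(* Given $f\in\mathcal{N}_{2,\omega}$, we have $f\in\mathcal{N}_{3,\max(\omega,4d)}$ and $$R_3(f;\max(\omega,4d))\le\frac{4d}{3}+\frac43R_2(f;\omega).$$
   Context: Inputs lie in $\mathcal{X}_d=\mathbb{S}^{d-1}\times\mathbb{S}^{d-1}\subset\mathbb{R}^{2d}$. A depth-$L$ ReLU network is $f_{\phi}(\mathbf{x})=\mathbf{w}_L^\top[\mathbf{W}_{L-1}[\cdots[\mathbf{W}_1\mathbf{x}+\mathbf{b}_1]_+\cdots]_++\mathbf{b}_{L-1}]_++b_L$, with $\phi=(\mathbf{W}_1,\mathbf{b}_1,\dots,\mathbf{w}_L,b_L)$; $\mathcal{N}_{L,\omega}$ is the set of such functions with all hidden widths at most $\omega$; $\|\phi\|^2$ is the sum of squares of all weights and biases; $R_L(f;\omega)=\inf\{\|\phi\|^2/L:\ f_\phi=f\text{ on }\mathcal{X}_d,\ \text{all hidden widths}\le\omega\}$. *)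

(* Defs.v *)
From HB Require Import structures.
From mathcomp Require Import all_boot all_order all_algebra.
From mathcomp Require Import classical_sets reals.
Unset Printing Implicit Defensive.
Import Order.TTheory GRing.Theory Num.Theory.
Local Open Scope ring_scope.
Local Open Scope classical_set_scope.

Inductive net (R : nzRingType) : nat -> Type :=
| NOut (n : nat) of 'rV[R]_n & R : net R n
| NHid (n m : nat) of 'M[R]_(m, n) & 'cV[R]_m & net R m : net R n.
Arguments NOut {R n}.
Arguments NHid {R n m}.

Definition relu {R : realDomainType} {m : nat} (v : 'cV[R]_m) : 'cV[R]_m :=
  map_mx (fun t => Num.max t 0) v.

Fixpoint neval {R : realDomainType} {n : nat} (N : net R n) : 'cV[R]_n -> R :=
  match N in net _ k return 'cV[R]_k -> R with
  | NOut _ w b => fun x => (w *m x) 0 0 + b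
  | NHid _ _ W b N' => fun x => neval N' (relu (W *m x + b))
  end.

Fixpoint ndepth {R : nzRingType} {n : nat} (N : net R n) : nat :=
  match N with
  | NOut _ _ _ => 1%N
  | NHid _ _ _ _ N' => (ndepth N').+1
  end.

Fixpoint nmaxwidth {R : nzRingType} {n : nat} (N : net R n) : nat :=
  match N with
  | NOut _ _ _ => 0%N
  | NHid _ m _ _ N' => maxn m (nmaxwidth N')
  end.

Fixpoint nsqnorm {R : nzRingType} {n : nat} (N : net R n) : R :=
  match N with
  | NOut _ w b => \sum_j (w 0 j) ^+ 2 + b ^+ 2
  | NHid _ _ W b N' =>
      \sum_i \sum_j (W i j) ^+ 2 + \sum_i (b i 0) ^+ 2 + nsqnorm N'
  end.

(* X_d = S^{d-1} x S^{d-1} inside R^{2d} = R^{d+d} *)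
Definition Xd {R : realDomainType} (d : nat) (x : 'cV[R]_(d + d)) : Prop :=
  \sum_i (usubmx x i 0) ^+ 2 = 1 /\ \sum_i (dsubmx x i 0) ^+ 2 = 1.

Definition realizes {R : realDomainType} (d L w : nat)
  (f : 'cV[R]_(d + d) -> R) (N : net R (d + d)) : Prop :=
  ndepth N = L /\ (nmaxwidth N <= w)%N /\ forall x, Xd d x -> neval N x = f x.

Definition inN {R : realDomainType} (d L w : nat) (f : 'cV[R]_(d + d) -> R) : Prop :=
  exists N, realizes d L w f N.

Definition Rcost {R : realType} (d L w : nat) (f : 'cV[R]_(d + d) -> R) : R :=
  inf [set nsqnorm N / L%:R | N in [set N | realizes d L w f N]].

(* Main.v *)
Require Import Defs.
From HB Require Import structures.
From mathcomp Require Import all_boot all_order all_algebra.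
From mathcomp Require Import classical_sets reals.
From mathcomp Require Import lra zify.
Import Order.TTheory GRing.Theory Num.Theory.
Local Open Scope ring_scope.

Section Aux.
Variable R : realType.

Definition pre {n : nat} (N : net R n) : net R (n + n) :=
  match N in net _ k return net R (k + k) with
  | NOut _ w b => NOut (row_mx w (- w)) b
  | NHid _ _ W b N' => NHid (row_mx W (- W)) b N'
  end.

Definition deepen {n : nat} (N : net R n) : net R n :=
  NHid (col_mx (1%:M : 'M[R]_n) (- 1%:M)) 0 (pre N).

Lemma max_split (t : R) : Num.max t 0 - Num.max (- t) 0 = t.
Proof.
rewrite /Order.max.
case: ifP => h1; case: ifP => h2; move: h1 h2;
  rewrite ?oppr_lt0 => h1 h2; try (move/negbT: h1; rewrite -leNgt => h1);
  try (move/negbT: h2; rewrite -leNgt => h2); lra.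
Qed.

Lemma relu_split n (x : 'cV[R]_n) :
  relu x - relu (- x) = x.
Proof.
by apply/matrixP => i j; rewrite !mxE max_split.
Qed.

Lemma relu_col n (x : 'cV[R]_n) :
  relu (col_mx (1%:M : 'M[R]_n) (- 1%:M) *m x + 0) = col_mx (relu x) (relu (- x)).
Proof.
by rewrite addr0 mul_col_mx mul1mx mulNmx mul1mx /relu map_col_mx.
Qed.

Lemma neval_deepen n (N : net R n) x : neval (deepen N) x = neval N x.
Proof.
rewrite /deepen /= relu_col.
case: N x => [k w b | k m W b N'] x /=.
- by rewrite mul_row_col mulNmx -mulmxN -mulmxDr relu_split.
- by rewrite mul_row_col mulNmx -mulmxN -mulmxDr relu_split.
Qed.

Lemma ndepth_deepen n (N : net R n) : ndepth (deepen N) = (ndepth N).+1.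
Proof. by case: N. Qed.

Lemma nmaxwidth_deepen n (N : net R n) :
  nmaxwidth (deepen N) = maxn (n + n) (nmaxwidth N).
Proof. by case: N. Qed.

Lemma nsqnorm_ge0 n (N : net R n) : 0 <= nsqnorm N.
Proof.
elim: N => [k w b | k m W b N' IH] /=.
- by apply: addr_ge0; [apply: sumr_ge0 => j _|]; rewrite sqr_ge0.
- apply: addr_ge0 => //; apply: addr_ge0; apply: sumr_ge0 => i _;
    rewrite ?sqr_ge0 //; apply: sumr_ge0 => j _; rewrite sqr_ge0 //.
Qed.

Lemma sum_row_sq k (v : 'rV[R]_k) :
  \sum_(j < k + k) (row_mx v (- v) 0 j) ^+ 2 = 2 * \sum_j (v 0 j) ^+ 2.
Proof.
rewrite big_split_ord /=.
under eq_bigr do rewrite row_mxEl.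
under [X in _ + X]eq_bigr do rewrite row_mxEr mxE sqrrN.
by rewrite mulr2n mulrDl mul1r.
Qed.

Lemma sum_rowM_sq m k (W : 'M[R]_(m, k)) i :
  \sum_(j < k + k) (row_mx W (- W) i j) ^+ 2 = 2 * \sum_j (W i j) ^+ 2.
Proof.
rewrite big_split_ord /=.
under eq_bigr do rewrite row_mxEl.
under [X in _ + X]eq_bigr do rewrite row_mxEr mxE sqrrN.
by rewrite mulrDl mul1r.
Qed.

Lemma nsqnorm_pre n (N : net R n) : nsqnorm (pre N) <= 2 * nsqnorm N.
Proof.
case: N => [k w b | k m W b N'] /=.
- rewrite sum_row_sq.
  have h1 : 0 <= \sum_j (w 0 j) ^+ 2 by apply: sumr_ge0 => j _; rewrite sqr_ge0.
  have h2 : 0 <= b ^+ 2 by rewrite sqr_ge0.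
  lra.
- under eq_bigr do rewrite sum_rowM_sq.
  rewrite -mulr_sumr.
  have h1 : 0 <= \sum_i \sum_j (W i j) ^+ 2.
    by apply: sumr_ge0 => i _; apply: sumr_ge0 => j _; rewrite sqr_ge0.
  have h2 : 0 <= \sum_i (b i 0) ^+ 2 by apply: sumr_ge0 => j _; rewrite sqr_ge0.
  have h3 := nsqnorm_ge0 _ N'.
  lra.
Qed.

Lemma sum_id_sq n :
  \sum_(i < n + n) \sum_(j < n) (col_mx (1%:M : 'M[R]_n) (- 1%:M) i j) ^+ 2
  = (n + n)%:R.
Proof.
have inner : forall i : 'I_n, \sum_(j < n) ((1%:M : 'M[R]_n) i j) ^+ 2 = 1.
  move=> i; rewrite (bigD1 i) //= big1 => [|j hj].
    by rewrite !mxE eqxx /= expr1n addr0.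
  by rewrite !mxE eq_sym (negPf hj) /= expr0n.
rewrite big_split_ord /=.
under eq_bigr do under eq_bigr do rewrite col_mxEu.
under [X in _ + X]eq_bigr do under eq_bigr do rewrite col_mxEd mxE sqrrN.
under eq_bigr do rewrite inner.
by rewrite sumr_const card_ord natrD.
Qed.

Lemma nsqnorm_deepen n (N : net R n) :
  nsqnorm (deepen N) <= (n + n)%:R + 2 * nsqnorm N.
Proof.
rewrite /deepen /= sum_id_sq.
have -> : \sum_(i < n + n) ((0 : 'cV[R]_(n + n)) i 0) ^+ 2 = 0.
  by rewrite big1 // => i _; rewrite mxE expr0n.
have := nsqnorm_pre _ N; lra.
Qed.

End Aux.
Arguments pre {R n}.
Arguments deepen {R n}.
Arguments nsqnorm_ge0 {R n}.
Arguments nsqnorm_deepen {R n}.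
Arguments neval_deepen {R n}.
Arguments ndepth_deepen {R n}.
Arguments nmaxwidth_deepen {R n}.

Lemma deepen_realizes (R : realType) (d w : nat) (f : 'cV[R]_(d + d) -> R) N :
  realizes d 2 w f N -> realizes d 3 (maxn w (4 * d)) f (deepen N).
Proof.
move=> [hd [hw hf]]; split; first by rewrite ndepth_deepen hd.
split; last by move=> x hx; rewrite neval_deepen hf.
rewrite nmaxwidth_deepen geq_max; apply/andP; split; rewrite leq_max; apply/orP; [right|left] => //.
have e : (d + d + (d + d) = 4 * d)%N by lia. by rewrite e.
Qed.
Arguments deepen_realizes {R d w f N}.

Lemma Rcost3_le (R : realType) (d w : nat) (f : 'cV[R]_(d + d) -> R) N :
  realizes d 2 w f N ->
  Rcost d 3 (maxn w (4 * d)) f <= ((4 * d)%:R + 2 * nsqnorm N) / 3.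
Proof.
move=> hN.
have h3 := deepen_realizes hN.
have hle : Rcost d 3 (maxn w (4 * d)) f <= nsqnorm (deepen N) / 3%:R.
  apply: ge_inf; last by exists (deepen N).
  exists 0 => y [M _ <-]; apply: divr_ge0 => //; exact: nsqnorm_ge0.
apply: (le_trans hle).
have := nsqnorm_deepen N.
have -> : ((d + d + (d + d))%:R : R) = (4 * d)%:R by congr (_%:R); lia.
move=> h; lra.
Qed.
Arguments Rcost3_le {R d w f N}.

Theorem lemma5 (R : realType) (d w : nat) (f : 'cV[R]_(d + d) -> R) :
  inN d 2 w f ->
  inN d 3 (maxn w (4 * d)) f /\
  Rcost d 3 (maxn w (4 * d)) f <= (4 * d)%:R / 3 + 4 / 3 * Rcost d 2 w f.
Proof.
move=> [N hN]; split; first by exists (deepen N); exact: deepen_realizes hN.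
suff: (3 * Rcost d 3 (maxn w (4 * d)) f - (4 * d)%:R) / 4 <= Rcost d 2 w f.
  move=> h; lra.
apply: lb_le_inf; first by exists (nsqnorm N / 2%:R), N.
move=> y [M hM <-]; have := Rcost3_le hM; lra.
Qed.
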